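(* Let $\tilde{\mathcal P}$ be a delayed-reward MDP with episodic reward and let $\mathcal P$ be an SDP obtained from $\tilde{\mathcal P}$ by a (possibly higher order Markov) reward redistribution such that $\mathcal P$ is strictly return-equivalent to $\tilde{\mathcal P}$. Fix a policy $\pi$ and assume the reward redistribution is optimal, i.e. $\kappa(T-t-1,t)=0$ for $0\le t\le T-1$. Suppose further that for all $0\le t\le T$ and all histories with positive probability under $\pi$, $$\mathbb E_\pi\left[\sum_{\tau=0}^{T-t-1}R_{t+2+\tau}\mid s_t,a_t\right]=\mathbb E_\pi\left[\sum_{\tau=0}^{T-t-1}R_{t+2+\tau}\mid s_0,a_0,\dots,s_t,a_t\right].$$ Then for all $1\le t\le T$, $$\mathbb E_\pi\left[R_{t+1}\mid s_{t-1},a_{t-1},s_t,a_t\right]=\tilde q^\pi(s_t,a_t)-\tilde q^\pi(s_{t-1},a_{t-1}).$$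
   Context: Setting: finite horizon $T$, discount $\gamma=1$, finite state set $\mathcal S$ and action set $\mathcal A$; states are time-aware. Episodes are $s_0,a_0,R_1,s_1,a_1,R_2,\dots,s_T,a_T,R_{T+1}$. The MDP $\tilde{\mathcal P}$ has Markov transition-reward distribution $p(s_{t+1},\tilde R_{t+1}\mid s_t,a_t)$ and episodic (delayed) reward: $\tilde R_{t+1}=0$ for $t<T$, so the return is $\tilde G_0=\tilde R_{T+1}$. A sequence-Markov decision process (SDP) is a decision process with the same Markov state transition probabilities but whose reward $R_{t+1}$ may depend on the whole history $(s_0,a_0,\dots,s_t,a_t)$ (higher order Markov reward), drawn conditionally on that history and independently of later states and actions; a reward redistribution produces such an SDP $\mathcal P$ with rewards $R_{1},\dots,R_{T+1}$ and return $G_0=\sum_{t=0}^{T}R_{t+1}$. Two SDPs are strictly return-equivalent if for every policy they have the same expected return at $t=0$ and additionally the same expected return for every episode, i.e. $\mathbb E[\tilde G_0\mid s_0,a_0,\dots,s_T,a_T]=\mathbb E[G_0\mid s_0,a_0,\dots,s_T,a_T]$. For a policy $\pi(a\mid s)$, $\mathbb E_\pi[\cdot\mid\ldots]$ is the expectation over episodes generated by $p$ and $\pi$ containing the conditioned state-action pairs at the indicated times. $\tilde q^\pi(s_t,a_t)=\mathbb E_\pi[\sum_{k=0}^{T-t}\tilde R_{t+k+1}\mid s_t,a_t]=\mathbb E_\pi[\tilde R_{T+1}\mid s_t,a_t]$ is the $Q$-function of $\tilde{\mathcal P}$. The expected future rewards are $\kappa(m,t-1)=\mathbb E_\pi\left[\sum_{\tau=0}^{m}R_{t+1+\tau}\mid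 s_{t-1},a_{t-1}\right]$ (redistributed rewards of $\mathcal P$), and a reward redistribution is called optimal if $\kappa(T-t-1,t)=0$ for $0\le t\le T-1$. *)

(* Defs.v *)
From HB Require Import structures.
From mathcomp Require Import all_boot all_order all_algebra.
Set Implicit Arguments. Unset Strict Implicit. Unset Printing Implicit Defensive.
Import Order.TTheory GRing.Theory Num.Theory.
Local Open Scope ring_scope.

Definition episode (S A : finType) (T : nat) := {ffun 'I_T.+1 -> S * A}.

Definition sa (S A : finType) (T : nat) (e : episode S A T) (t : nat) : S * A :=
  e (inord t).

Definition is_dist (R : realFieldType) (X : finType) (p : X -> R) : Prop :=
  (forall x, 0 <= p x) /\ \sum_(x : X) p x = 1.

(* Probability of an episode under initial distribution p0, Markov
   transition probabilities P s a s' = p(s'|s,a), and policy pol s a = pi(a|s). *)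
Definition epprob (R : realFieldType) (S A : finType) (T : nat)
  (p0 : S -> R) (P : S -> A -> S -> R) (pol : S -> A -> R)
  (e : episode S A T) : R :=
  p0 (sa e 0).1 * pol (sa e 0).1 (sa e 0).2 *
  \prod_(t < T) (P (sa e t).1 (sa e t).2 (sa e t.+1).1 *
                 pol (sa e t.+1).1 (sa e t.+1).2).

Definition Pr (R : realFieldType) (S A : finType) (T : nat)
  (p0 : S -> R) (P : S -> A -> S -> R) (pol : S -> A -> R)
  (B : pred (episode S A T)) : R :=
  \sum_(e | B e) epprob p0 P pol e.

(* Conditional expectation E_pi[X | B] (meaningful when Pr B > 0). *)
Definition cexp (R : realFieldType) (S A : finType) (T : nat)
  (p0 : S -> R) (P : S -> A -> S -> R) (pol : S -> A -> R)
  (B : pred (episode S A T)) (X : episode S A T -> R) : R :=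
  (\sum_(e | B e) epprob p0 P pol e * X e) / Pr p0 P pol B.

Definition ev_at (S A : finType) (T : nat) (t : nat) (s : S) (a : A)
  : pred (episode S A T) := fun e => sa e t == (s, a).

Definition ev_at2 (S A : finType) (T : nat) (t : nat) (s : S) (a : A)
  (s' : S) (a' : A) : pred (episode S A T) :=
  fun e => (sa e t.-1 == (s, a)) && (sa e t == (s', a')).

Definition ev_hist (S A : finType) (T : nat) (t : nat) (e0 : episode S A T)
  : pred (episode S A T) := fun e => [forall i : 'I_T.+1, (i <= t)%N ==> (e i == e0 i)].

(* Redistributed rewards: r t e is the (conditional mean of the) reward
   R_{t+1}, depending on the history up to time t only. *)
Definition history_dependent (R : realFieldType) (S A : finType) (T : nat)
  (r : nat -> episode S A T -> R) : Prop :=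
  forall t (e e' : episode S A T),
    (forall i : 'I_T.+1, (i <= t)%N -> e i = e' i) -> r t e = r t e'.

Definition ret (R : realFieldType) (S A : finType) (T : nat)
  (r : nat -> episode S A T -> R) (e : episode S A T) : R :=
  \sum_(k < T.+1) r k e.

(* Future rewards sum_{tau=0}^{T-t-1} R_{t+2+tau} = sum_{k=t+1}^{T} R_{k+1} *)
Definition future (R : realFieldType) (S A : finType) (T : nat)
  (r : nat -> episode S A T -> R) (t : nat) (e : episode S A T) : R :=
  \sum_(t.+1 <= k < T.+1) r k e.

(* Delayed return tilde G_0 = tilde R_{T+1}, with conditional mean rT(s_T,a_T) *)
Definition dret (R : realFieldType) (S A : finType) (T : nat)
  (rT : S -> A -> R) (e : episode S A T) : R :=
  rT (sa e T).1 (sa e T).2.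

Definition qtilde (R : realFieldType) (S A : finType) (T : nat)
  (p0 : S -> R) (P : S -> A -> S -> R) (pol : S -> A -> R)
  (rT : S -> A -> R) (t : nat) (s : S) (a : A) : R :=
  cexp p0 P pol (@ev_at S A T t s a) (dret rT).

(* Main.v *)
Require Import Defs.
From HB Require Import structures.
From mathcomp Require Import all_boot all_order all_algebra.
From mathcomp Require Import ring lra zify.
Import Order.TTheory GRing.Theory Num.Theory.
Local Open Scope ring_scope.

Section Markov.
Variables (R : realFieldType) (S A : finType) (T : nat)
  (p0 : S -> R) (P : S -> A -> S -> R) (pol : S -> A -> R).
Local Notation ep := (episode S A T).

Definition splice k (e1 e2 : ep) : ep :=
  [ffun i : 'I_T.+1 => if (i <= k)%N then e1 i else e2 i].

Definition Fi i (e : ep) := P (sa e i).1 (sa e i).2 (sa e i.+1).1 * pol (sa e i.+1).1 (sa e i.+1).2.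
Definition pre k (e : ep) := p0 (sa e 0).1 * pol (sa e 0).1 (sa e 0).2 * \prod_(0 <= i < k) Fi i e.
Definition post k (e : ep) := \prod_(k <= i < T) Fi i e.

Lemma epprob_split k e : (k <= T)%N -> epprob p0 P pol e = pre k e * post k e.
Proof.
move=> kT; rewrite /epprob /pre /post -[in RHS]mulrA -(big_cat_nat (leq0n k) kT) big_mkord.
by [].
Qed.

Lemma sa_splice k e1 e2 j : (j <= T)%N ->
  sa (splice k e1 e2) j = if (j <= k)%N then sa e1 j else sa e2 j.
Proof. by move=> jT; rewrite /sa ffunE inordK. Qed.

Lemma pre_splice k e1 e2 : (k <= T)%N -> pre k (splice k e1 e2) = pre k e1.
Proof.
move=> kT.
have E : forall j, (j <= k)%N -> sa (splice k e1 e2) j = sa e1 j.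
  by move=> j jk; rewrite sa_splice ?jk // (leq_trans jk kT).
rewrite /pre !E //; congr (_ * _); apply: eq_big_nat => i /andP[_ ik].
by rewrite /Fi !E // ltnW.
Qed.

Lemma post_splice k e1 e2 : (k <= T)%N -> sa e1 k = sa e2 k ->
  post k (splice k e1 e2) = post k e2.
Proof.
move=> kT h.
have E : forall j, (k <= j)%N -> (j <= T)%N -> sa (splice k e1 e2) j = sa e2 j.
  move=> j kj jT; rewrite sa_splice //; case: ifP => // jk.
  have -> : j = k by apply/eqP; rewrite eqn_leq jk kj.
  exact: h.
rewrite /post; apply: eq_big_nat => i /andP[ki iT].
rewrite /Fi !E //; lia.
Qed.

Lemma splice_inv k e1 e2 : splice k (splice k e1 e2) (splice k e2 e1) = e1.
Proof. apply/ffunP => i; rewrite !ffunE; by case: (nat_of_ord i <= k)%N. Qed.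

Definition N k x (h : ep -> R) := \sum_(e | sa e k == x) epprob p0 P pol e * h e.

Lemma markov k x (g f : ep -> R) : (k <= T)%N ->
  (forall e1 e2, g (splice k e1 e2) = g e1) ->
  (forall e1 e2, sa e1 k = sa e2 k -> f (splice k e1 e2) = f e2) ->
  N k x (fun e => g e * f e) * N k x (fun _ => 1) = N k x g * N k x f.
Proof.
move=> kT hg hf; rewrite /N big_distrl /=.
under eq_bigr do rewrite big_distrr /=.
rewrite pair_big_dep /= big_distrl /=.
under [in RHS]eq_bigr do rewrite big_distrr /=.
rewrite [in RHS]pair_big_dep /=.
pose sig := fun p : ep * ep => (splice k p.1 p.2, splice k p.2 p.1).
have inj : injective sig.
  by apply: (can_inj (g:=sig)) => -[e1 e2]; rewrite /sig /= !splice_inv.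
rewrite (reindex_inj inj) /=.
apply: eq_big => [[e1 e2]|[e1 e2] /andP[h1 h2]] /=.
  by rewrite !sa_splice // leqnn.
rewrite /= !sa_splice // leqnn in h1 h2; move/eqP in h1; move/eqP in h2.
have h12 : sa e1 k = sa e2 k by rewrite h1 h2.
have h21 : sa e2 k = sa e1 k by rewrite h1 h2.
rewrite !(epprob_split k) // !pre_splice // !post_splice // hg hf //.
ring.
Qed.

End Markov.

Theorem mainTheorem2 (R : realFieldType) (S A : finType) (T : nat)
  (p0 : S -> R) (P : S -> A -> S -> R) (pol : S -> A -> R)
  (tm : S -> nat) (rT : S -> A -> R) (r : nat -> episode S A T -> R) :
  (* MDP dynamics and policy *)
  is_dist p0 ->
  (forall s a, is_dist (P s a)) ->
  (forall s, is_dist (pol s)) ->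
  (* time-aware states *)
  (forall s, 0 < p0 s -> tm s = 0%N) ->
  (forall s a s', 0 < P s a s' -> tm s' = (tm s).+1) ->
  (* the reward redistribution: higher-order Markov rewards *)
  history_dependent r ->
  (* strict return-equivalence *)
  (forall pol', (forall s, is_dist (pol' s)) ->
     cexp p0 P pol' (@predT (episode S A T)) (dret rT) = cexp p0 P pol' (@predT (episode S A T)) (ret r)) ->
  (forall pol', (forall s, is_dist (pol' s)) ->
     forall e, 0 < epprob p0 P pol' e -> dret rT e = ret r e) ->
  (* optimality: kappa(T-t-1, t) = 0 for 0 <= t <= T-1 *)
  (forall t s a, (t < T)%N -> 0 < Pr p0 P pol (@ev_at S A T t s a) ->
     cexp p0 P pol (ev_at t s a) (future r t) = 0) ->
  (* future expected rewards depend on the history only through (s_t, a_t) *)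
  (forall t (e : episode S A T), (t <= T)%N ->
     0 < Pr p0 P pol (ev_hist t e) ->
     cexp p0 P pol (ev_at t (sa e t).1 (sa e t).2) (future r t)
     = cexp p0 P pol (ev_hist t e) (future r t)) ->
  forall t s a s' a', (1 <= t <= T)%N ->
    0 < Pr p0 P pol (@ev_at2 S A T t s a s' a') ->
    cexp p0 P pol (ev_at2 t s a s' a') (r t)
    = @qtilde R S A T p0 P pol rT t s' a' - @qtilde R S A T p0 P pol rT t.-1 s a.
Proof.
move=> hp0 hP hpol _ _ hdep _ hret hopt hmark t s a s' a' /andP[t1 tT] hpos.
have pge0 : forall e : episode S A T, 0 <= epprob p0 P pol e.
  move=> e; rewrite /epprob; apply: mulr_ge0; first apply: mulr_ge0.
  - exact: (proj1 hp0).
  - exact: (proj1 (hpol _)).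
  apply: prodr_ge0 => i _; apply: mulr_ge0; [exact: (proj1 (hP _ _)) | exact: (proj1 (hpol _))].
have Prpos : forall (B : pred (episode S A T)) e, B e -> 0 < epprob p0 P pol e -> 0 < Pr p0 P pol B.
  move=> B e Be pe; rewrite /Pr (bigD1 e) //=.
  have : 0 <= \sum_(i | B i && (i != e)) epprob p0 P pol i by apply: sumr_ge0.
  lra.
have histrefl : forall k (e : episode S A T), ev_hist k e e.
  by move=> k e; apply/forallP => i; rewrite eqxx implybT.
pose C k (e : episode S A T) := \sum_(j < k.+1) r j e.
have step1 : forall k e, (k <= T)%N -> 0 < epprob p0 P pol e ->
    cexp p0 P pol (ev_hist k e) (dret rT) = C k e.
  move=> k e kT pe.
  have PB := Prpos _ _ (histrefl k e) pe.
  have PB0 : Pr p0 P pol (ev_hist k e) != 0 by rewrite gt_eqF.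
  have key : \sum_(e' | ev_hist k e e') epprob p0 P pol e' * dret rT e' =
      \sum_(e' | ev_hist k e e') epprob p0 P pol e' * (C k e + future r k e').
    apply: eq_bigr => e' he'.
    have := pge0 e'; rewrite le0r => /orP[/eqP ->|pe']; first by rewrite !mul0r.
    rewrite (hret pol hpol e' pe'); congr (_ * _).
    rewrite /ret /future -(big_mkord xpredT (fun j => r j e')).
    rewrite (big_cat_nat (leq0n k.+1)) //= big_mkord; congr (_ + _).
    apply: eq_bigr => j _; apply: hdep => i ij.
    move/forallP: he' => /(_ i) /implyP he'.
    apply/eqP; apply: he'; apply: (leq_trans ij); rewrite -ltnS; exact: ltn_ord.
  have fut0 : \sum_(e' | ev_hist k e e') epprob p0 P pol e' * future r k e' = 0.
    case: (ltnP k T) => kT'.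
      have PA : 0 < Pr p0 P pol (@ev_at S A T k (sa e k).1 (sa e k).2).
        apply: (Prpos _ e _ pe); by rewrite /ev_at -surjective_pairing eqxx.
      have := hopt _ _ _ kT' PA; rewrite hmark //.
      rewrite /cexp => /eqP; rewrite mulf_eq0 invr_eq0 (negbTE PB0) orbF => /eqP.
      done.
    have kTe : k = T by apply/eqP; rewrite eqn_leq kT kT'.
    by apply: big1 => e' _; rewrite /future big_geq ?mulr0 // kTe.
  rewrite /cexp key.
  under eq_bigr do rewrite mulrDr.
  rewrite big_split /= fut0 addr0 -big_distrl /=.
  move: PB0; rewrite /Pr => PB0.
  by field.
have step2 : forall k (e : episode S A T), (k <= T)%N -> 0 < epprob p0 P pol e ->
    cexp p0 P pol (ev_hist k e) (dret rT) = qtilde T p0 P pol rT k (sa e k).1 (sa e k).2.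
  move=> k e kT pe.
  have PB := Prpos _ _ (histrefl k e) pe.
  have PA : 0 < Pr p0 P pol (@ev_at S A T k (sa e k).1 (sa e k).2).
    apply: (Prpos _ e _ pe); by rewrite /ev_at -surjective_pairing eqxx.
  pose g := fun e' : episode S A T => (ev_hist k e e')%:R : R.
  have M := @markov R S A T p0 P pol k (sa e k) g (dret rT) kT.
  have hist_at : forall e', ev_hist k e e' -> sa e' k == sa e k.
    move=> e' /forallP /(_ (inord k)); rewrite inordK ?ltnS // leqnn /= => /eqP.
    by rewrite /sa => ->.
  have Ng : forall h : episode S A T -> R,
      N R S A T p0 P pol k (sa e k) (fun e' => g e' * h e') =
      \sum_(e' | ev_hist k e e') epprob p0 P pol e' * h e'.
    move=> h; rewrite /N [LHS]big_mkcond [RHS]big_mkcond; apply: eq_bigr => e' _.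
    rewrite /g; case H: (ev_hist k e e').
      by rewrite (hist_at _ H) mul1r.
    by case: ifP; rewrite ?mul0r ?mulr0.
  have Ng1 : N R S A T p0 P pol k (sa e k) g = Pr p0 P pol (ev_hist k e).
    transitivity (N R S A T p0 P pol k (sa e k) (fun e' => g e' * 1)).
      by apply: eq_bigr => *; rewrite mulr1.
    by rewrite Ng /Pr; apply: eq_bigr => *; rewrite mulr1.
  have hg : forall e1 e2, g (splice S A T k e1 e2) = g e1.
    move=> e1 e2; rewrite /g /ev_hist; apply: congr1; apply: congr1; apply: eq_forallb => i.
    by rewrite /splice ffunE; case: ifP.
  have hf : forall e1 e2, sa e1 k = sa e2 k -> dret rT (splice S A T k e1 e2) = dret rT e2.
    move=> e1 e2 h; rewrite /dret sa_splice //; case: ifP => // Tk.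
    have kE : k = T by apply/eqP; rewrite eqn_leq Tk kT.
    by rewrite kE in h; rewrite h.
  have {}M := M hg hf.
  rewrite Ng Ng1 in M.
  have N1 : N R S A T p0 P pol k (sa e k) (fun _ => 1) = \sum_(e' : episode S A T | sa e' k == sa e k) epprob p0 P pol e'.
    by rewrite /N; apply: eq_bigr => *; rewrite mulr1.
  rewrite N1 in M.
  rewrite /qtilde /cexp /Pr /ev_at -surjective_pairing.
  move: PA PB M; rewrite /Pr /ev_at -surjective_pairing /N.
  set a1 := \sum_(e' | ev_hist k e e') _.
  set b1 := \sum_(e' | ev_hist k e e') _.
  set c1 := \sum_(e' | _ == _) _.
  set d1 := \sum_(e' | _ == _) _.
  move=> PA PB M.
  have a0 : a1 != 0 by rewrite gt_eqF.
  have c0 : c1 != 0 by rewrite gt_eqF.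
  have -> : b1 = a1 * d1 / c1 by rewrite -M mulfK.
  by rewrite mulrAC [a1 * d1]mulrC mulfK.
have hr : forall e : episode S A T, 0 < epprob p0 P pol e -> ev_at2 t s a s' a' e ->
    r t e = qtilde T p0 P pol rT t s' a' - qtilde T p0 P pol rT t.-1 s a.
  move=> e pe /andP[/eqP h1 /eqP h2].
  have tT' : (t.-1 <= T)%N by apply: leq_trans (leq_pred t) tT.
  have E1 := step1 t e tT pe.
  have E2 := step2 t e tT pe.
  have E3 := step1 t.-1 e tT' pe.
  have E4 := step2 t.-1 e tT' pe.
  have HC : C t e = C t.-1 e + r t e.
    have HCg : forall j, C j.+1 e = C j e + r j.+1 e by move=> j; rewrite /C big_ord_recr.
    by have := HCg t.-1; rewrite prednK.
  rewrite E1 in E2; rewrite E3 in E4; rewrite h2 in E2; rewrite h1 in E4.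
  rewrite -E2 -E4 HC; ring.
rewrite /cexp.
have -> : \sum_(e : episode S A T | ev_at2 t s a s' a' e) epprob p0 P pol e * r t e =
    \sum_(e : episode S A T | ev_at2 t s a s' a' e) epprob p0 P pol e *
      (qtilde T p0 P pol rT t s' a' - qtilde T p0 P pol rT t.-1 s a).
  apply: eq_bigr => e he.
  have := pge0 e; rewrite le0r => /orP[/eqP ->|pe]; first by rewrite !mul0r.
  by rewrite hr.
rewrite -big_distrl /=.
move: hpos; rewrite /Pr => hpos.
by rewrite mulrAC divff ?mul1r // gt_eqF.
Qed.
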